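(* Let $\mathcal{D}$ be a distribution on $\mathbb{R}^d\times\mathbb{R}$ with $\|\mathbf{x}\|_\infty\le1$ and $|y|\le B$ almost surely. The GAELR algorithm (with any sampling distribution $(q_1,\dots,q_d)$ and budget $k$) generates gradient estimates satisfying, for all $t$, $$\big\|\mathbb{E}_{\mathcal{D},A}[\widetilde{\mathbf{g}}_t^2]\big\|_\infty\le 4B^2\Big(\frac1k\big\|\mathbb{E}_{\mathcal{D},A}[\widetilde{\mathbf{x}}_{t,r}^2]\big\|_\infty+1\Big).$$
   Context: For a vector $\mathbf{a}$, $\mathbf{a}^2$ denotes its coordinatewise square. $\mathrm{clip}(x,c)=\max\{\min\{x,c\},-c\}$. Algorithm GAELR (parameters $B,\eta>0$, probabilities $q_i$ summing to $1$, integer budget $k>0$; i.i.d. examples $(\mathbf{x}_t,y_t)\sim\mathcal{D}$): $\mathbf{z}_1^\pm=\mathbf{1}_d$. For each $t$: $\mathbf{w}_t=(\mathbf{z}_t^+-\mathbf{z}_t^-)B/(\|\mathbf{z}_t^+\|_1+\|\mathbf{z}_t^-\|_1)$; for $r=1..k$ draw $i_{t,r}$ with probability $q_{i_{t,r}}$ and set $\widetilde{\mathbf{x}}_{t,r}=\frac{1}{q_{i_{t,r}}}\mathbf{x}_t[i_{t,r}]\mathbf{e}_{i_{t,r}}$ (identically distributed over $r$); $\widetilde{\mathbf{x}}_t=\frac1k\sum_r\widetilde{\mathbf{x}}_{t,r}$; draw $j_t$ with probability $p_j=|w_{t,j}|/\|\mathbf{w}_t\|_1$, $\widetilde\phi_t=\frac{w_{t,j_t}}{p_{j_t}}\mathbf{x}_t[j_t]-y_t$;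 $\widetilde{\mathbf{g}}_t=\widetilde\phi_t\widetilde{\mathbf{x}}_t$; $\bar{\mathbf{g}}_t[i]=\mathrm{clip}(\widetilde{\mathbf{g}}_t[i],1/\eta)$; $\mathbf{z}_{t+1}^+[i]=\mathbf{z}_t^+[i]e^{-\eta\bar{\mathbf{g}}_t[i]}$, $\mathbf{z}_{t+1}^-[i]=\mathbf{z}_t^-[i]e^{\eta\bar{\mathbf{g}}_t[i]}$. All draws independent. $\mathbb{E}_{\mathcal{D},A}$ is expectation over examples and algorithm randomness. *)

(* Defs.v *)
From HB Require Import structures.
From mathcomp Require Import all_boot all_order all_algebra.
From mathcomp Require Import all_classical all_reals all_analysis.
Set Implicit Arguments. Unset Strict Implicit. Unset Printing Implicit Defensive.
Import Order.TTheory GRing.Theory Num.Theory.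
Import numFieldNormedType.Exports.
Local Open Scope classical_set_scope.
Local Open Scope ring_scope.

(* An example is (X w, Y w) where w : T is drawn from the probability P;    *)
(* this represents the distribution D on R^d x R.           *)

Section GAELR.
Variables (R : realType) (d k : nat).

Definition state := (('I_d -> R) * ('I_d -> R))%type.

Definition l1norm (v : 'I_d -> R) : R := \sum_(i < d) `|v i|.

Definition gaelr_w (B : R) (z : state) : 'I_d -> R :=
  fun i => (z.1 i - z.2 i) * B / (l1norm z.1 + l1norm z.2).

Definition gaelr_p (w : 'I_d -> R) (j : 'I_d) : R :=
  if l1norm w == 0 then d%:R^-1 else `|w j| / l1norm w.

Definition gaelr_xr (q : 'I_d -> R) (x : 'I_d -> R) (i : 'I_d) : 'I_d -> R :=
  fun i' => if i' == i then x i / q i else 0.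

Definition gaelr_xt (q : 'I_d -> R) (x : 'I_d -> R) (I : {ffun 'I_k -> 'I_d})
  : 'I_d -> R :=
  fun i' => k%:R^-1 * \sum_(r < k) gaelr_xr q x (I r) i'.

Definition gaelr_phi (w x : 'I_d -> R) (y : R) (j : 'I_d) : R :=
  w j / gaelr_p w j * x j - y.

Definition gaelr_g (B : R) (q : 'I_d -> R) (z : state) (x : 'I_d -> R) (y : R)
  (I : {ffun 'I_k -> 'I_d}) (j : 'I_d) : 'I_d -> R :=
  fun i => gaelr_phi (gaelr_w B z) x y j * gaelr_xt q x I i.

Definition clip (x c : R) : R := Num.max (Num.min x c) (- c).

Definition gaelr_next (B eta : R) (q : 'I_d -> R) (z : state) (x : 'I_d -> R)
  (y : R) (I : {ffun 'I_k -> 'I_d}) (j : 'I_d) : state :=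
  let g := gaelr_g B q z x y I j in
  (fun i => z.1 i * expR (- (eta * clip (g i) eta^-1)),
   fun i => z.2 i * expR (eta * clip (g i) eta^-1)).

Definition gaelr_init : state := (fun _ => 1, fun _ => 1).

Variables (dT : measure_display) (T : measurableType dT).

(* Expectation over one round (example, i_{t,1..k}, j_t) of a nonnegative   *)
(* quantity F, from state z.                                                *)
Definition round_exp (B : R) (P : probability T R)
  (q : 'I_d -> R) (z : state)
  (F : T -> {ffun 'I_k -> 'I_d} -> 'I_d -> \bar R) : \bar R :=
  (\int[P]_(om in setT)
     \sum_(I : {ffun 'I_k -> 'I_d})
        ((\prod_(r < k) q (I r))%:E *
         \sum_(j < d) ((gaelr_p (gaelr_w B z) j)%:E * F om I j)))%E.

(* Expectation, over examples and algorithm randomness, of a nonnegative   *)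
(* quantity F of the round that comes after t further rounds from z.        *)
Fixpoint proc_exp (B eta : R) (P : probability T R) (X : T -> 'I_d -> R)
  (Y : T -> R) (q : 'I_d -> R)
  (F : state -> T -> {ffun 'I_k -> 'I_d} -> 'I_d -> \bar R)
  (t : nat) (z : state) : \bar R :=
  match t with
  | 0 => round_exp B P q z (F z)
  | t'.+1 => round_exp B P q z (fun om I j =>
       proc_exp B eta P X Y q F t' (gaelr_next B eta q z (X om) (Y om) I j))
  end.

Definition Eg2 B eta P X Y q (t : nat) (i : 'I_d) : \bar R :=
  proc_exp B eta P X Y q
    (fun z om I j => ((gaelr_g B q z (X om) (Y om) I j i) ^+ 2)%:E) t.-1 gaelr_init.

Definition Exr2 B eta P X Y q (t : nat) (r : 'I_k) (i : 'I_d) : \bar R :=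
  proc_exp B eta P X Y q
    (fun z om I j => ((gaelr_xr q (X om) (I r) i) ^+ 2)%:E) t.-1 gaelr_init.

Definition enorm_inf (v : 'I_d -> \bar R) : \bar R := (\big[maxe/0%E]_(i < d) v i)%E.

End GAELR.

(* Main.v *)
Require Import Defs.
From HB Require Import structures.
From mathcomp Require Import all_boot all_order all_algebra.
From mathcomp Require Import all_classical all_reals all_analysis.
From mathcomp Require Import ring lra.
Import Order.TTheory GRing.Theory Num.Theory.
Set Implicit Arguments. Unset Strict Implicit.
Import HBNNSimple.
Local Open Scope classical_set_scope.
Local Open Scope ring_scope.
Lemma int_mono (R : realType) (dT : measure_display) (T : measurableType dT)
  (P : probability T R) (f g : T -> \bar R) :
  (forall x, 0 <= f x)%E -> (forall x, f x <= g x)%E ->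
  (\int[P]_(x in setT) f x <= \int[P]_(x in setT) g x)%E.
Proof.
move=> f0 fg.
have g0 x : (0 <= g x)%E by apply: le_trans (f0 x) (fg x).
rewrite (ge0_integralTE _ f0) (ge0_integralTE _ g0).
apply: ge_ereal_sup => _ [h hf <-]; apply: ereal_sup_ubound.
by exists h => // x; apply: le_trans (hf x) (fg x).
Qed.

Lemma int_bound (R : realType) (dT : measure_display) (T : measurableType dT)
  (P : probability T R) (f g : T -> \bar R) (a b : R) :
  0 < a -> 0 <= b ->
  (forall x, 0 <= f x)%E -> (forall x, 0 <= g x)%E ->
  {ae P, forall x, f x <= a%:E * g x + b%:E}%E ->
  (\int[P]_(x in setT) f x <= a%:E * \int[P]_(x in setT) g x + b%:E)%E.
Proof.
move=> a0 b0 f0 g0 [N [mN PN sub]].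
rewrite (ge0_integralTE _ f0).
apply: ge_ereal_sup => _ [h hf <-].
pose h' : T -> R := fun x => \1_(~` N) x * (Num.max (h x - b) 0 / a).
have mh : measurable_fun setT (fun x => h x) by exact: measurable_funP.
have mh' : measurable_fun setT h'.
  apply: measurable_realfun.measurable_funM; first exact: measurable_realfun.measurable_indic (measurableC mN).
  apply: measurable_realfun.measurable_funM; last exact: measurable_cst.
  apply: measurable_realfun.measurable_maxr; last exact: measurable_cst.
  by apply: measurable_realfun.measurable_funB => //; exact: measurable_cst.
have h'0 x : 0 <= h' x.
  by rewrite /h' mulr_ge0 // ?divr_ge0 ?le_max ?lexx ?orbT // ltW.
have h'g x : ((h' x)%:E <= g x)%E.
  rewrite /h' indicE; case: (boolP (x \in ~` N)) => xN; last by rewrite mul0r.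
  rewrite mul1r.
  have : ~ (~` [set x | (f x <= a%:E * g x + b%:E)%E]) x.
    by move=> /sub; rewrite inE in xN; apply: xN.
  move/contrapT => /= fx.
  have hfx := le_trans (hf x) fx.
  move: (g0 x) hfx; case: (g x) => [r| |] //= r0.
    rewrite -EFinM -EFinD lee_fin => hr; rewrite lee_fin ler_pdivrMr //.
    rewrite ge_max; apply/andP; split; last by rewrite mulr_ge0 // ltW.
    by rewrite lerBlDr mulrC.
  by rewrite leey.
apply: (@le_trans _ _ (a%:E * \int[P]_(x in setT) (h' x)%:E + b%:E)%E).
  have -> : sintegral P h = (\int[P]_(x in setT) (h x)%:E)%E.
    by rewrite integral_nnsfun // patch_setT.
  rewrite -ge0_integralZl_EFin //; last 3 first.
  - by move=> x _; rewrite lee_fin.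
  - exact/measurable_realfun.measurable_EFinP.
  - exact: ltW.
  have -> : b%:E = (\int[P]_(x in setT) (cst b%:E x))%E.
    rewrite integral_cst //; transitivity (b%:E * 1)%E; first by rewrite mule1.
    by congr (_ * _)%E; apply/esym; exact: probability_setT.
  rewrite -ge0_integralD //; last 2 first.
  - by move=> x _; apply: mule_ge0; rewrite lee_fin // ltW.
  - by apply: measurable_funeM; exact/measurable_realfun.measurable_EFinP.
  apply: ae_ge0_le_integral => //.
  - by move=> x _; rewrite lee_fin.
  - exact/measurable_realfun.measurable_EFinP.
  - by move=> x _; apply: adde_ge0; [apply: mule_ge0|]; rewrite lee_fin // ltW.
  - apply: emeasurable_funD; last exact: measurable_cst.
    by apply: measurable_funeM; exact/measurable_realfun.measurable_EFinP.
  exists N; split => // x /= Hx; apply: contrapT => xN; apply: Hx => _.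
  rewrite /cst -EFinM -EFinD lee_fin /h' indicE.
  have -> : x \in ~` N by rewrite inE.
  rewrite mul1r mulrCA divff ?gt_eqF // mulr1 -lerBlDr.
  by rewrite le_max lexx.
apply: leeD => //; apply: lee_wpmul2l; first by rewrite lee_fin ltW.
by apply: int_mono => // x; rewrite lee_fin.
Qed.
Lemma EQ (R : realType) (k d : nat) (q : 'I_d -> R) (h : 'I_k -> 'I_d -> R) :
  \sum_(I : {ffun 'I_k -> 'I_d}) \prod_(r < k) (q (I r) * h r (I r)) =
  \prod_(r < k) \sum_(m < d) q m * h r m.
Proof. by rewrite bigA_distr_bigA. Qed.

Lemma sumQ1 (R : realType) (k d : nat) (q : 'I_d -> R) :
  \sum_(i < d) q i = 1 ->
  \sum_(I : {ffun 'I_k -> 'I_d}) \prod_(r < k) q (I r) = 1.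
Proof.
move=> hq; have := @EQ _ k d q (fun _ _ => 1); under eq_bigr do under eq_bigr do rewrite mulr1.
move=> ->; rewrite big1 // => r _; under eq_bigr do rewrite mulr1; exact: hq.
Qed.

Lemma prod_if (R : realType) (k : nat) (s : 'I_k) (c : 'I_k -> R) :
  \prod_(r < k) (if r == s then c r else 1) = c s.
Proof. by rewrite -big_mkcond big_pred1_eq. Qed.

Lemma Eprod (R : realType) (k d : nat) (q : 'I_d -> R) (u : 'I_d -> R) (s s' : 'I_k) :
  \sum_(i < d) q i = 1 ->
  \sum_(I : {ffun 'I_k -> 'I_d}) (\prod_(r < k) q (I r)) * (u (I s) * u (I s')) =
  if s == s' then \sum_(m < d) q m * (u m * u m) else (\sum_(m < d) q m * u m) ^+ 2.
Proof.
move=> hq.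
transitivity (\sum_(I : {ffun 'I_k -> 'I_d}) \prod_(r < k) (q (I r) *
   ((if r == s then u (I r) else 1) * (if r == s' then u (I r) else 1)))).
  apply: eq_bigr => I _; rewrite big_split big_split /=.
  by rewrite (@prod_if _ k s (fun r => u (I r))) (@prod_if _ k s' (fun r => u (I r))).
rewrite (@EQ _ k d q (fun r m => (if r == s then u m else 1) * (if r == s' then u m else 1))); case: eqVneq => [<-|ne].
  rewrite (bigD1 s) //= eqxx.
  rewrite [X in _ * X]big1 ?mulr1 //.
  move=> r rs; rewrite (negbTE rs); under eq_bigr do rewrite mulr1 mulr1; exact: hq.
rewrite (bigD1 s) //= (bigD1 s') /=; last by rewrite eq_sym ne.
rewrite [X in _ * (_ * X)]big1 ?mulr1; last first.
  move=> r /andP[rs rs']; rewrite (negbTE rs) (negbTE rs').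
  by under eq_bigr do rewrite mulr1 mulr1; exact: hq.
rewrite expr2; congr (_ * _); apply: eq_bigr => m _.
  by rewrite eqxx (negbTE ne) mulr1.
by rewrite eqxx eq_sym (negbTE ne) mul1r.
Qed.

Lemma Abound (R : realType) (k d : nat) (q : 'I_d -> R) (u : 'I_d -> R) :
  (0 < k)%N -> \sum_(i < d) q i = 1 ->
  \sum_(I : {ffun 'I_k -> 'I_d}) (\prod_(r < k) q (I r)) *
     (k%:R^-1 * \sum_(s < k) u (I s)) ^+ 2
  <= k%:R^-1 * \sum_(m < d) q m * (u m * u m) + (\sum_(m < d) q m * u m) ^+ 2.
Proof.
move=> k0 hq.
set M2 := \sum_(m < d) q m * (u m * u m); set M1 := \sum_(m < d) q m * u m.
have sq I : (k%:R^-1 * \sum_(s < k) u (I s)) ^+ 2 =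
    k%:R^-1 ^+ 2 * \sum_(s < k) \sum_(s' < k) u (I s) * u (I s').
  rewrite exprMn; congr (_ * _); rewrite expr2 big_distrl /=; apply: eq_bigr => s _.
  by rewrite big_distrr.
under eq_bigr do rewrite sq mulrCA.
rewrite -big_distrr /=.
have -> : \sum_(I : {ffun 'I_k -> 'I_d}) (\prod_(r < k) q (I r)) *
     \sum_(s < k) \sum_(s' < k) u (I s) * u (I s') =
   \sum_(s < k) \sum_(s' < k) (if s == s' then M2 else M1 ^+ 2).
  under eq_bigr do rewrite big_distrr /=.
  rewrite exchange_big; apply: eq_bigr => s _ /=.
  under eq_bigr do rewrite big_distrr /=.
  rewrite exchange_big; apply: eq_bigr => s' _ /=.
  exact: Eprod.
have kE : k%:R != 0 :> R by rewrite pnatr_eq0 -lt0n.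
have bnd : \sum_(s < k) \sum_(s' < k) (if s == s' then M2 else M1 ^+ 2)
    <= k%:R * M2 + k%:R * (k%:R * M1 ^+ 2).
  have -> : k%:R * M2 + k%:R * (k%:R * M1 ^+ 2) =
      \sum_(s < k) \sum_(s' < k) ((if s == s' then M2 else 0) + M1 ^+ 2).
    under eq_bigr => s _.
      rewrite big_split /=; under eq_bigr do rewrite (eq_sym s).
      rewrite -big_mkcond big_pred1_eq sumr_const card_ord.
    over.
    rewrite big_split /= !sumr_const card_ord.
    by rewrite !mulr_natl.
  apply: ler_sum => s _; apply: ler_sum => s' _.
  case: eqP => _; first by rewrite lerDl sqr_ge0.
  by rewrite add0r.
apply: le_trans (ler_wpM2l _ bnd) _; first by rewrite exprn_ge0 // invr_ge0.
rewrite le_eqVlt; apply/orP; left; apply/eqP; field; exact: kE.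
Qed.

Lemma l1_ge0 (R : realType) (d : nat) (w : 'I_d -> R) : 0 <= l1norm w.
Proof. by apply: sumr_ge0 => i _; exact: normr_ge0. Qed.

Lemma norm_le_l1 (R : realType) (d : nat) (w : 'I_d -> R) j : `|w j| <= l1norm w.
Proof.
rewrite /l1norm (bigD1 j) //= lerDl; apply: sumr_ge0 => i _; exact: normr_ge0.
Qed.

Lemma p_ge0 (R : realType) (d : nat) (w : 'I_d -> R) j : 0 <= gaelr_p w j.
Proof.
rewrite /gaelr_p; case: ifP => _; first by rewrite invr_ge0.
by rewrite divr_ge0 // l1_ge0.
Qed.

Lemma p_sum (R : realType) (d : nat) (w : 'I_d -> R) :
  (0 < d)%N -> \sum_(j < d) gaelr_p w j = 1.
Proof.
move=> d0; rewrite /gaelr_p; have [L0|L0] := boolP (l1norm w == 0).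
  rewrite sumr_const card_ord -mulr_natr; field; by rewrite pnatr_eq0 -lt0n.
by rewrite -big_distrl /= divff.
Qed.

Lemma wp_bound (R : realType) (d : nat) (w : 'I_d -> R) j :
  `|w j / gaelr_p w j| <= l1norm w.
Proof.
have hw := @norm_le_l1 _ _ w j.
rewrite /gaelr_p; case: ifP => [/eqP L0|/negbT L0].
  have -> : w j = 0 by apply/normr0_eq0/le_anti; rewrite normr_ge0 -L0 hw.
  by rewrite mul0r normr0 l1_ge0.
have [->|wj0] := eqVneq (w j) 0; first by rewrite mul0r normr0 l1_ge0.
rewrite invf_div normrM normf_div !normr_id (ger0_norm (@l1_ge0 _ _ w)).
rewrite mulrCA divff ?mulr1 // normr_eq0 //.
Qed.

Lemma l1w_le (R : realType) (d : nat) (B : R) (z : state R d) :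
  0 <= B -> l1norm (gaelr_w B z) <= B.
Proof.
move=> B0; rewrite /l1norm /gaelr_w.
set S := l1norm z.1 + l1norm z.2.
have S0 : 0 <= S by rewrite addr_ge0 // l1_ge0.
under eq_bigr do rewrite normrM normrM normfV (ger0_norm B0) (ger0_norm S0).
rewrite -big_distrl -big_distrl /=.
have [->|Sn0] := eqVneq S 0; first by rewrite invr0 mulr0.
have hs : \sum_(i < d) `|z.1 i - z.2 i| <= S.
  rewrite /S /l1norm -big_split /=; apply: ler_sum => i _; exact: ler_normB.
rewrite ler_pdivrMr; last by rewrite lt_def Sn0.
by rewrite mulrC ler_wpM2l.
Qed.

Lemma phi_bound (R : realType) (d : nat) (B : R) (z : state R d) (x : 'I_d -> R) y j :
  0 <= B -> (forall j, `|x j| <= 1) -> `|y| <= B ->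
  gaelr_phi (gaelr_w B z) x y j ^+ 2 <= 4 * B ^+ 2.
Proof.
move=> B0 hx hy; rewrite /gaelr_phi.
set w := gaelr_w B z.
have h1 : `|w j / gaelr_p w j| <= B := le_trans (wp_bound w j) (l1w_le z B0).
have h2 : `|w j / gaelr_p w j * x j| <= B.
  rewrite normrM; apply: le_trans (ler_wpM2l (normr_ge0 _) (hx j)) _.
  by rewrite mulr1.
have h3 : `|w j / gaelr_p w j * x j - y| <= 2 * B.
  apply: le_trans (ler_normB _ _) _; lra.
rewrite -(real_normK (num_real _)).
have := normr_ge0 (w j / gaelr_p w j * x j - y).
move: h3; set a := `|_|; nra.
Qed.

Lemma M1_bound (R : realType) (d : nat) (q x : 'I_d -> R) (i : 'I_d) :
  (forall j, `|x j| <= 1) ->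
  (\sum_(m < d) q m * gaelr_xr q x m i) ^+ 2 <= 1.
Proof.
move=> hx.
rewrite (bigD1 i) //= big1 ?addr0; last first.
  by move=> m mi; rewrite /gaelr_xr eq_sym (negbTE mi) mulr0.
rewrite /gaelr_xr eqxx.
have [->|qi0] := eqVneq (q i) 0; first by rewrite mul0r expr0n.
rewrite mulrCA divff // mulr1 -(real_normK (num_real _)).
have := hx i; have := normr_ge0 (x i); set a := `|x i|; nra.
Qed.

Lemma base_real (R : realType) (d k : nat) (B : R) (q x : 'I_d -> R) (y : R)
  (z : state R d) (i : 'I_d) (r : 'I_k) :
  (0 < d)%N -> (0 < k)%N -> 0 <= B -> (forall m, 0 <= q m) ->
  \sum_(m < d) q m = 1 -> (forall j, `|x j| <= 1) -> `|y| <= B ->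
  \sum_(I : {ffun 'I_k -> 'I_d}) (\prod_(r0 < k) q (I r0)) *
    \sum_(j < d) gaelr_p (gaelr_w B z) j * (gaelr_g B q z x y I j i) ^+ 2
  <= (4 * B ^+ 2 * k%:R^-1) *
    (\sum_(I : {ffun 'I_k -> 'I_d}) (\prod_(r0 < k) q (I r0)) *
      \sum_(j < d) gaelr_p (gaelr_w B z) j * (gaelr_xr q x (I r) i) ^+ 2)
    + 4 * B ^+ 2.
Proof.
move=> d0 k0 B0 q0 hq hx hy.
set w := gaelr_w B z; pose u := fun m => gaelr_xr q x m i.
have Sx : \sum_(I : {ffun 'I_k -> 'I_d}) (\prod_(r0 < k) q (I r0)) *
      \sum_(j < d) gaelr_p w j * (gaelr_xr q x (I r) i) ^+ 2 =
    \sum_(m < d) q m * (u m * u m).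
  under eq_bigr do rewrite -big_distrl /= p_sum // mul1r expr2.
  by rewrite (@Eprod _ k d q u r r hq) eqxx.
rewrite Sx.
have Sg : \sum_(I : {ffun 'I_k -> 'I_d}) (\prod_(r0 < k) q (I r0)) *
    \sum_(j < d) gaelr_p w j * (gaelr_g B q z x y I j i) ^+ 2 <=
  \sum_(I : {ffun 'I_k -> 'I_d}) (\prod_(r0 < k) q (I r0)) *
    (4 * B ^+ 2 * (k%:R^-1 * \sum_(s < k) u (I s)) ^+ 2).
  apply: ler_sum => I _; apply: ler_wpM2l; first by apply: prodr_ge0.
  rewrite /gaelr_g; under eq_bigr do rewrite exprMn mulrA.
  rewrite -big_distrl /=; apply: ler_wpM2r; first exact: sqr_ge0.
  apply: le_trans (ler_sum _ (fun j _ => ler_wpM2l (p_ge0 w j)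
     (@phi_bound _ d B z x y j B0 hx hy))) _.
  by rewrite -big_distrl /= p_sum // mul1r.
apply: le_trans Sg _.
under eq_bigr do rewrite mulrCA; rewrite -big_distrr /=.
have c0 : 0 <= 4 * B ^+ 2 by rewrite mulr_ge0 // sqr_ge0.
apply: le_trans (ler_wpM2l c0 (@Abound _ k d q u k0 hq)) _.
rewrite mulrDr -mulrA lerD2l; apply: le_trans (ler_wpM2l c0 (@M1_bound _ d q x i hx)) _.
by rewrite mulr1.
Qed.

Lemma ewsum (R : realType) (I : finType) (w : I -> R) (G H : I -> \bar R) (a b : R) :
  (forall n, 0 <= w n) -> \sum_n w n = 1 -> (forall n, (0 <= H n)%E) ->
  (forall n, (G n <= a%:E * H n + b%:E)%E) -> 0 <= a -> 0 <= b ->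
  (\sum_n (w n)%:E * G n <= a%:E * \sum_n (w n)%:E * H n + b%:E)%E.
Proof.
move=> w0 w1 H0 hG a0 b0.
apply: le_trans.
  apply: lee_sum => n _; apply: lee_wpmul2l; [rewrite lee_fin; exact: w0|exact: hG].
have E n : ((w n)%:E * (a%:E * H n + b%:E) =
    a%:E * ((w n)%:E * H n) + (w n * b)%:E)%E.
  rewrite ge0_muleDr ?lee_fin //; last by apply: mule_ge0; rewrite ?lee_fin.
  by rewrite muleCA EFinM.
under eq_bigr do rewrite E.
rewrite big_split /= sumEFin -big_distrl /= w1 mul1r.
rewrite ge0_sume_distrr //; move=> n _; apply: mule_ge0 => //; rewrite lee_fin.
exact: w0.
Qed.

Lemma conv (R : realType) (I J : finType) (W : I -> R) (p : J -> R) (V : I -> J -> R) :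
  (\sum_i (W i)%:E * \sum_j (p j)%:E * (V i j)%:E)%E =
  (\sum_i W i * \sum_j p j * V i j)%:E.
Proof.
under eq_bigr do under eq_bigr do rewrite -EFinM.
under eq_bigr do rewrite sumEFin -EFinM.
by rewrite sumEFin.
Qed.

Lemma round_ge0 (R : realType) (d k : nat) (dT : measure_display) (T : measurableType dT)
  (B : R) (P : probability T R) (q : 'I_d -> R) (z : state R d)
  (F : T -> {ffun 'I_k -> 'I_d} -> 'I_d -> \bar R) :
  (forall m, 0 <= q m) -> (forall om I j, (0 <= F om I j)%E) ->
  (0 <= round_exp B P q z F)%E.
Proof.
move=> q0 F0; apply: integral_ge0 => om _.
apply: sume_ge0 => I _; apply: mule_ge0; first by rewrite lee_fin prodr_ge0.
apply: sume_ge0 => j _; apply: mule_ge0 => //; rewrite lee_fin; exact: p_ge0.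
Qed.

Lemma proc_ge0 (R : realType) (d k : nat) (dT : measure_display) (T : measurableType dT)
  (B eta : R) (P : probability T R) X Y (q : 'I_d -> R)
  (F : state R d -> T -> {ffun 'I_k -> 'I_d} -> 'I_d -> \bar R) t z :
  (forall m, 0 <= q m) -> (forall z om I j, (0 <= F z om I j)%E) ->
  (0 <= proc_exp B eta P X Y q F t z)%E.
Proof.
move=> q0 F0; elim: t z => [|t IH] z /=; apply: round_ge0 => //.
Qed.

Lemma proc_bound (R : realType) (dT : measure_display) (T : measurableType dT)
  (P : probability T R) (d : nat) (X : T -> 'I_d -> R) (Y : T -> R)
  (B eta : R) (q : 'I_d -> R) (k : nat) (i : 'I_d) (r : 'I_k) :
  {ae P, forall om, forall i, `|X om i| <= 1} ->
  {ae P, forall om, `|Y om| <= B} ->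
  0 < B -> (forall i, 0 <= q i) -> \sum_(i < d) q i = 1 -> (0 < k)%N ->
  forall t z,
  (proc_exp B eta P X Y q
     (fun z om (I : {ffun 'I_k -> 'I_d}) j => ((gaelr_g B q z (X om) (Y om) I j i) ^+ 2)%:E) t z
   <= (4 * B ^+ 2 * k%:R^-1)%:E * proc_exp B eta P X Y q
     (fun z om I j => ((gaelr_xr q (X om) (I r) i) ^+ 2)%:E) t z
     + (4 * B ^+ 2)%:E)%E.
Proof.
move=> hX hY B0 q0 hq k0.
have d0 : (0 < d)%N by apply: leq_ltn_trans (leq0n i) (ltn_ord i).
have a0 : 0 < 4 * B ^+ 2 * k%:R^-1.
  by rewrite !mulr_gt0 // ?exprn_gt0 // invr_gt0 ltr0n.
have b0 : 0 <= 4 * B ^+ 2 by rewrite mulr_ge0 // sqr_ge0.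
have F0 z om (I : {ffun 'I_k -> 'I_d}) (j : 'I_d) (v : R) : (0 <= (v ^+ 2)%:E)%E.
  by rewrite lee_fin sqr_ge0.
elim=> [|t IH] z /=.
  rewrite /round_exp; apply: int_bound => //.
  - by move=> om; apply: sume_ge0 => I _; apply: mule_ge0;
      [rewrite lee_fin prodr_ge0|apply: sume_ge0 => j _; apply: mule_ge0;
      rewrite ?lee_fin ?sqr_ge0 ?p_ge0].
  - by move=> om; apply: sume_ge0 => I _; apply: mule_ge0;
      [rewrite lee_fin prodr_ge0|apply: sume_ge0 => j _; apply: mule_ge0;
      rewrite ?lee_fin ?sqr_ge0 ?p_ge0].
  apply: filterS2 hX hY => om hx hy.
  rewrite !conv -EFinM -EFinD lee_fin.
  apply: base_real => //; exact: ltW.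
rewrite /round_exp; apply: int_bound => //.
- by move=> om; apply: sume_ge0 => I _; apply: mule_ge0;
    [rewrite lee_fin prodr_ge0|apply: sume_ge0 => j _; apply: mule_ge0;
    [rewrite lee_fin p_ge0|apply: proc_ge0 => //= *; rewrite lee_fin sqr_ge0]].
- by move=> om; apply: sume_ge0 => I _; apply: mule_ge0;
    [rewrite lee_fin prodr_ge0|apply: sume_ge0 => j _; apply: mule_ge0;
    [rewrite lee_fin p_ge0|apply: proc_ge0 => //= *; rewrite lee_fin sqr_ge0]].
apply: aeW => om.
apply: ewsum => //; last exact: ltW.
- by move=> I; apply: prodr_ge0.
- exact: sumQ1.
- by move=> I; apply: sume_ge0 => j _; apply: mule_ge0;
    [rewrite lee_fin p_ge0|apply: proc_ge0 => //= *; rewrite lee_fin sqr_ge0].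
move=> I; apply: ewsum => //; last exact: ltW.
- by move=> j; apply: p_ge0.
- exact: p_sum.
- by move=> j; apply: proc_ge0 => //= *; rewrite lee_fin sqr_ge0.
Qed.

Lemma enorm_ge0 (R : realType) (d : nat) (v : 'I_d -> \bar R) : (0 <= enorm_inf v)%E.
Proof.
rewrite /enorm_inf; elim/big_rec: _ => //= i x _ hx.
by rewrite le_max hx orbT.
Qed.

Lemma enorm_ub (R : realType) (d : nat) (v : 'I_d -> \bar R) i : (v i <= enorm_inf v)%E.
Proof. by rewrite /enorm_inf (bigD1 i) //= le_max lexx. Qed.

Unset Implicit Arguments.

Theorem lemma12 (R : realType) (dT : measure_display) (T : measurableType dT)
  (P : probability T R) (d : nat) (X : T -> 'I_d -> R) (Y : T -> R)
  (B eta : R) (q : 'I_d -> R) (k : nat) :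
  (forall i, measurable_fun setT (fun om => X om i)) ->
  measurable_fun setT Y ->
  {ae P, forall om, forall i, `|X om i| <= 1} ->
  {ae P, forall om, `|Y om| <= B} ->
  0 < B -> 0 < eta ->
  (forall i, 0 <= q i) -> \sum_(i < d) q i = 1 ->
  (0 < k)%N ->
  forall (t : nat), (1 <= t)%N -> forall r : 'I_k,
  (enorm_inf (Eg2 k B eta P X Y q t)
   <= (4 * B ^+ 2)%:E * ((k%:R^-1)%:E * enorm_inf (Exr2 B eta P X Y q t r) + 1))%E.
Proof.
move=> _ _ hX hY B0 _ q0 hq k0 t _ r.
pose M := enorm_inf (Exr2 B eta P X Y q t r).
have M0 : (0 <= M)%E by exact: enorm_ge0.
have b0 : 0 <= 4 * B ^+ 2 by rewrite mulr_ge0 // sqr_ge0.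
rewrite [X in (_ <= X)%E](_ : _ =
    (4 * B ^+ 2 * k%:R^-1)%:E * M + (4 * B ^+ 2)%:E)%E; last first.
  rewrite ge0_muleDr //; last first.
    by apply: mule_ge0; [rewrite lee_fin invr_ge0|exact: enorm_ge0].
  by rewrite mule1 muleA -EFinM.
have R0 : (0 <= (4 * B ^+ 2 * k%:R^-1)%:E * M + (4 * B ^+ 2)%:E)%E.
  by apply: adde_ge0; [apply: mule_ge0; rewrite // lee_fin mulr_ge0 // invr_ge0|rewrite lee_fin].
rewrite /enorm_inf; elim/big_ind: _ => //.
  by move=> x y hx hy; rewrite ge_max hx hy.
move=> i _.
apply: le_trans (proc_bound eta i r hX hY B0 q0 hq k0 t.-1 (gaelr_init R d)) _.
apply: leeD => //; apply: lee_wpmul2l; first by rewrite lee_fin mulr_ge0 // invr_ge0.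
exact: (enorm_ub (Exr2 B eta P X Y q t r) i).
Qed.
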